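(* Let $p$ be a prime. There is no symmetric triple of the form $\{p, p+2, p+6\}$. Moreover, if $\{p, p+4, p+6\}$ is a symmetric triple, then $p \equiv 1 \pmod{12}$.
   Context: Two distinct primes $p$ and $q$ form a symmetric pair if $\gcd(p-1, q-1) = |p-q|$. A symmetric triple is a set of three primes such that any two of them form a symmetric pair. *)

(* Defs.v *)
From mathcomp Require Import all_boot.
Set Implicit Arguments. Unset Strict Implicit. Unset Printing Implicit Defensive.

Definition absdiff (p q : nat) : nat := (p - q) + (q - p).

Definition symmetric_pair (p q : nat) : Prop :=
  [/\ prime p, prime q, p <> q & gcdn p.-1 q.-1 = absdiff p q].

Definition symmetric_triple (a b c : nat) : Prop :=
  [/\ symmetric_pair a b, symmetric_pair a c & symmetric_pair b c].

(* Main.v *)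
Require Import Defs.
From mathcomp Require Import all_boot.
From mathcomp Require Import zify.

Lemma gcd_dvd_l {a b c : nat} : gcdn a b = c -> c %| a.
Proof. by move=> <-; exact: dvdn_gcdl. Qed.

Theorem lemma1 (p : nat) (hp : prime p) :
  ~ symmetric_triple p (p + 2) (p + 6) /\
  (symmetric_triple p (p + 4) (p + 6) -> p = 1 %[mod 12]).
Proof.
have p2 : 2 <= p by exact: prime_gt1.
split.
- case=> [[_ hp2 _ _] [_ hq _ h] _].
  have E : absdiff p (p + 6) = 6 by rewrite /absdiff; lia.
  rewrite E in h.
  have d := gcd_dvd_l h.
  have d3 : 3 %| p + 2.
    have -> : p + 2 = p.-1 + 3 by lia.
    rewrite dvdn_addr //; exact: dvdn_trans d.

  have := (prime_nt_dvdP hp2 (isT : 3 != 1)).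
  move=> /(_ d3) H. lia.
- case=> [[_ _ _ h1] [_ _ _ h2] _].
  have E1 : absdiff p (p + 4) = 4 by rewrite /absdiff; lia.
  have E2 : absdiff p (p + 6) = 6 by rewrite /absdiff; lia.
  rewrite E1 in h1; rewrite E2 in h2.
  have d1 := gcd_dvd_l h1.
  have d2 := gcd_dvd_l h2.
  lia.
Qed.
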